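(* Consider a discounted Markov decision problem with discount factor $\gamma\in(0,1)$ and the inexact policy mirror descent method as described in the context, with $\pi^{(0)}\in\operatorname{rint}\Pi$, and suppose that $\|\widehat Q(\pi^{(k)})-Q(\pi^{(k)})\|_\infty\le\tau$ for all $k\ge0$. Let $\rho\in\Delta(\mathcal{S})$ and $\vartheta_\rho=\frac1{1-\gamma}\|d_\rho(\pi^\star)/\rho\|_\infty$. If the (positive) step sizes satisfy $\eta_0\ge\frac{1-\gamma}{\gamma}D^\star_0$ and $\eta_{k+1}\ge\eta_k/\gamma$ for all $k\ge0$, then for all $k\ge0$, \[ V_\rho(\pi^{(k)})-V_\rho^\star\le\Bigl(1-\frac1{\vartheta_\rho}\Bigr)^k\frac2{1-\gamma}+\frac{4\vartheta_\rho}{1-\gamma}\tau . \]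
   Context: A discounted Markov decision problem (cost-minimization form): finite state set $\mathcal{S}$, finite action set $\mathcal{A}$, transition probabilities $P(s'|s,a)$, cost $R:\mathcal{S}\times\mathcal{A}\to[0,1]$, discount $\gamma$. Policies $\Pi=\Delta(\mathcal{A})^{|\mathcal{S}|}$; $\operatorname{rint}\Pi$ is the set of policies with all entries $\pi_{s,a}>0$. $V_s(\pi)=\mathbf{E}\bigl[\sum_{t\ge0}\gamma^tR(s_t,a_t)\mid s_0=s\bigr]$ with $a_t\sim\pi_{s_t}$, $s_{t+1}\sim P(\cdot|s_t,a_t)$; $V_\rho(\pi)=\sum_s\rho_sV_s(\pi)$; $V_\rho^\star=\min_{\pi\in\Pi}V_\rho(\pi)$; $\pi^\star$ denotes a policy minimizing $V_s$ simultaneously for all $s$. $Q_{s,a}(\pi)=R_{s,a}+\gamma\sum_{s'}P(s'|s,a)V_{s'}(\pi)$. Discounted state visitation: $d_{s,s'}(\pi)=(1-\gamma)\sum_{t\ge0}\gamma^t\Pr^\pi(s_t=s'\mid s_0=s)$, $d_{\rho,s'}(\pi)=\sum_s\rho_sd_{s,s'}(\pi)$. For $p,q\in\Delta(\mathcal{S})$, $\|p/q\|_\infty=\max_sp_s/q_s$ with $0/0=1$. Bregman divergence: $h:\mathbf{R}^{|\mathcal{A}|}\to\mathbf{R}\cup\{+\infty\}$ is a convex function of Legendre type (proper, closed, essentially smooth, strictly convex on the relative interior of its domain) with $\Delta(\mathcal{A})\subseteq\operatorname{dom}h$ and $\operatorname{rint}\Delta(\mathcal{A})\subseteq\operatorname{rint}\operatorname{dom}h$;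 $D(p,p')=h(p)-h(p')-\langle\nabla h(p'),p-p'\rangle$. Inexact policy mirror descent: given estimates $\widehat Q(\pi^{(k)})\in\mathbf{R}^{|\mathcal{S}|\times|\mathcal{A}|}$ of $Q(\pi^{(k)})$, for each $s$, $\pi^{(k+1)}_s=\arg\min_{p\in\Delta(\mathcal{A})}\{\eta_k\langle\widehat Q_s(\pi^{(k)}),p\rangle+D(p,\pi^{(k)}_s)\}$. Notation: $D^\star_k=\sum_sd_{\rho,s}(\pi^\star)D(\pi^\star_s,\pi^{(k)}_s)$. *)

(* Defs.v *)
From HB Require Import structures.
From mathcomp Require Import all_boot all_order all_algebra.
From mathcomp Require Import all_classical all_reals all_analysis.
Set Implicit Arguments. Unset Strict Implicit. Unset Printing Implicit Defensive.
Import Order.TTheory GRing.Theory Num.Theory.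
Import numFieldNormedType.Exports.
Local Open Scope classical_set_scope.
Local Open Scope ring_scope.

Section ConvexAnalysis.
Variables (R : realType) (n : nat).
Local Notation V := 'rV[R]_n.

Definition simplex : set V :=
  [set p | (forall j, 0 <= p ord0 j) /\ \sum_j p ord0 j = 1].

Definition aff_hull (C : set V) : set V :=
  [set x | exists (k : nat) (y : 'I_k -> V) (l : 'I_k -> R),
      (forall i, C (y i)) /\ \sum_i l i = 1 /\ x = \sum_i l i *: y i].

Definition rint (C : set V) : set V :=
  [set x | C x /\ exists2 e : R, 0 < e &
      forall z, aff_hull C z -> `|z - x| < e -> C z].

Definition dotv (u v : V) : R := \sum_j u ord0 j * v ord0 j.

Definition edom (h : V -> \bar R) : set V := [set x | (h x < +oo)%E].

Definition proper_fun (h : V -> \bar R) :=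
  (forall x, (-oo < h x)%E) /\ exists x, edom h x.

Definition lsc_fun (h : V -> \bar R) :=
  forall x (a : R), (a%:E < h x)%E -> \forall y \near x, (a%:E < h y)%E.

Definition convex_efun (h : V -> \bar R) :=
  forall x y (t : R), 0 < t < 1 ->
    (h ((t *: x + (1 - t) *: y)%R) <= t%:E * h x + (1 - t)%:E * h y)%E.

Definition grad (h : V -> \bar R) (x : V) : V :=
  \row_j 'D_(delta_mx ord0 j) (fine \o h) x.

Definition essentially_smooth (h : V -> \bar R) :=
  (exists x, interior (edom h) x) /\
  (forall x, interior (edom h) x -> differentiable (fine \o h) x) /\
  (forall (u : nat -> V) (x : V),
      (forall k, interior (edom h) (u k)) ->
      u @ \oo --> x -> ~ interior (edom h) x ->
      (fun k => `|grad h (u k)|) @ \oo --> +oo).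

Definition strictly_convex_on (h : V -> \bar R) (C : set V) :=
  forall x y (t : R), C x -> C y -> x != y -> 0 < t < 1 ->
    (h ((t *: x + (1 - t) *: y)%R) < t%:E * h x + (1 - t)%:E * h y)%E.

Definition legendre (h : V -> \bar R) :=
  [/\ proper_fun h, lsc_fun h, convex_efun h, essentially_smooth h
    & strictly_convex_on h (rint (edom h))].

Definition bregman (h : V -> \bar R) (p p' : V) : R :=
  fine (h p) - fine (h p') - dotv (grad h p') (p - p').

End ConvexAnalysis.

Section MDP.
Variables (R : realType) (S : finType) (n : nat).
Variables (P : S -> 'I_n -> S -> R) (c : S -> 'I_n -> R) (gamma : R).

Definition policy := S -> 'rV[R]_n.

Definition is_policy (pi : policy) := forall s, simplex (pi s).

Definition rint_policy (pi : policy) :=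
  is_policy pi /\ forall s a, 0 < pi s ord0 a.

Definition Ppi (pi : policy) (s s' : S) : R := \sum_a pi s ord0 a * P s a s'.
Definition cpi (pi : policy) (s : S) : R := \sum_a pi s ord0 a * c s a.

(* prob pi t s s' = Pr^pi(s_t = s' | s_0 = s) *)
Fixpoint prob (pi : policy) (t : nat) (s s' : S) : R :=
  match t with
  | 0 => (s == s')%:R
  | t'.+1 => \sum_s'' prob pi t' s s'' * Ppi pi s'' s'
  end.

(* V_s(pi) = E[sum_t gamma^t c(s_t,a_t) | s_0 = s] = sum_t gamma^t E[c(s_t,a_t)] *)
Definition Vf (pi : policy) (s : S) : R :=
  limn (fun N => \sum_(t < N) gamma ^+ t * \sum_s' prob pi t s s' * cpi pi s').

Definition Vrho (pi : policy) (rho : S -> R) : R := \sum_s rho s * Vf pi s.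

Definition Vstar (rho : S -> R) : R :=
  inf [set Vrho pi rho | pi in is_policy].

Definition Qf (pi : policy) (s : S) (a : 'I_n) : R :=
  c s a + gamma * \sum_s' P s a s' * Vf pi s'.

Definition dvis (pi : policy) (s s' : S) : R :=
  (1 - gamma) * limn (fun N => \sum_(t < N) gamma ^+ t * prob pi t s s').

Definition drho (pi : policy) (rho : S -> R) (s' : S) : R :=
  \sum_s rho s * dvis pi s s'.

Definition is_distr (rho : S -> R) := (forall s, 0 <= rho s) /\ \sum_s rho s = 1.

(* ||p/q||_oo = max_s p_s/q_s with 0/0 = 1 (and x/0 = +oo for x > 0) *)
Definition ratio_norm (p q : S -> R) : \bar R :=
  \big[Order.max/-oo%E]_s
    (if q s == 0 then (if p s == 0 then 1%E else +oo%E) else (p s / q s)%:E).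

End MDP.

(* Main.v *)
Require Import Defs.
From HB Require Import structures.
From mathcomp Require Import all_boot all_order all_algebra.
From mathcomp Require Import all_classical all_reals all_analysis.
From mathcomp Require Import ring lra.
Import Order.TTheory GRing.Theory Num.Theory.
Import numFieldNormedType.Exports.
Local Open Scope classical_set_scope.
Local Open Scope ring_scope.
Set Implicit Arguments. Unset Strict Implicit. Unset Printing Implicit Defensive.

Section Conv.
Variables (R : realType) (n : nat).
Local Notation V := 'rV[R]_n.

Lemma dir_deriv (f : V -> R) (x d : V) : differentiable f x ->
  (fun s : R => s^-1 * (f (x + s *: d) - f x)) @ 0^'+ -->
     dotv (\row_j 'D_(delta_mx ord0 j) f x) d.
Proof.
move=> df.
have H0 := @diff_derivable _ _ _ f x d df.
have H1 : (fun h : R => h^-1 *: ((f \o shift x) (h *: d) - f x)) @ 0^'+ -->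
   lim ((fun h : R => h^-1 *: ((f \o shift x) (h *: d) - f x)) @ 0^').
  apply: cvg_trans H0; apply: cvg_app => A /=.
  rewrite !near_simpl /= !near_withinE. apply: filterS => y Hy y0.
  by apply: Hy; rewrite gt_eqF.
move: H1.
have -> : lim ((fun h : R => h^-1 *: ((f \o shift x) (h *: d) - f x)) @ 0^') = 'D_d f x by [].
rewrite deriveE //.
have -> : 'd f x d = dotv (\row_j 'D_(delta_mx ord0 j) f x) d.
  rewrite {1}(row_sum_delta d) linear_sum /dotv; apply: eq_bigr => j _.
  by rewrite linearZ /= mxE deriveE // mulrC.
apply: cvg_trans; apply: near_eq_cvg; apply: nearW => s.
by rewrite /= [s *: d + x]addrC.
Qed.

Local Notation Simp := (@simplex R n).

Lemma dotvDr (u v w : V) : dotv u (v + w) = dotv u v + dotv u w.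
Proof. by rewrite /dotv -big_split; apply: eq_bigr => j _; rewrite mxE mulrDr. Qed.
Lemma dotvNr (u v : V) : dotv u (- v) = - dotv u v.
Proof. by rewrite /dotv -sumrN; apply: eq_bigr => j _; rewrite mxE mulrN. Qed.
Lemma dotvBr (u v w : V) : dotv u (v - w) = dotv u v - dotv u w.
Proof. by rewrite dotvDr dotvNr. Qed.
Lemma dotvZr (u v : V) (a : R) : dotv u (a *: v) = a * dotv u v.
Proof. by rewrite /dotv mulr_sumr; apply: eq_bigr => j _; rewrite mxE mulrCA. Qed.
Lemma dotv0r (u : V) : dotv u 0 = 0.
Proof. by rewrite /dotv big1 // => j _; rewrite mxE mulr0. Qed.
Lemma dotv_delta (u : V) j : dotv u (delta_mx ord0 j) = u ord0 j.
Proof.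
rewrite /dotv (bigD1 j) //= big1 ?addr0; first by rewrite mxE !eqxx mulr1.
by move=> i ij; rewrite mxE (negbTE ij) andbF mulr0.
Qed.

Lemma norm_entry (v : V) j : `|v ord0 j| <= `|v|.
Proof.
rewrite [X in _ <= X]mx_normrE.
exact: (le_bigmax 0 (fun ij : 'I_1 * 'I_n => `|v ij.1 ij.2|) (ord0, j)).
Qed.

Lemma norm_le (v : V) (B : R) : 0 <= B -> (forall j, `|v ord0 j| <= B) -> `|v| <= B.
Proof.
move=> B0 Hj; rewrite [X in X <= _]mx_normrE; apply/bigmax_leP; split => // -[i j] _.
by rewrite (ord1 i); apply: Hj.
Qed.

Lemma norm_delta j : `|delta_mx ord0 j : V| <= 1.
Proof.
apply: norm_le => // i; rewrite mxE; case: (_ && _) => /=; by rewrite ?normr1 ?normr0.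
Qed.

Lemma interiorP (A : set V) x :
  interior A x <-> exists2 e : R, 0 < e & forall y, `|x - y| < e -> A y.
Proof.
rewrite /interior; split.
  by move/nbhs_normP => [e /= e0 He]; exists e => // y Hy; apply: He.
move=> [e e0 He]; apply/nbhs_ballP; exists e => // y; rewrite -ball_normE /=; exact: He.
Qed.

Lemma simplex_conv (p q : V) (t : R) : Simp p -> Simp q -> 0 <= t <= 1 ->
  Simp (t *: p + (1 - t) *: q).
Proof.
move=> [p0 p1] [q0 q1] /andP[t0 t1]; split.
  move=> j; rewrite !mxE addr_ge0 // mulr_ge0 // subr_ge0 //.
rewrite (eq_bigr (fun j => t * p ord0 j + (1 - t) * q ord0 j)); last first.
  by move=> j _; rewrite !mxE.
by rewrite big_split /= -!mulr_sumr p1 q1 !mulr1 addrC subrK.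
Qed.

Lemma pos_rint (p : V) : Simp p -> (forall j, 0 < p ord0 j) -> rint Simp p.
Proof.
move=> Sp Hp; split => //.
set e := \big[Num.min/1]_j p ord0 j.
have e0 : 0 < e.
  apply: (big_ind (fun x => 0 < x)); [by [] | | by move=> j _; exact: Hp].
  by move=> a b a0 b0; rewrite lt_min a0 b0.
exists e => // z [k [y [l [Hy [Hl Ez]]]]] Hz; split.
  move=> j; have := norm_entry (z - p) j; rewrite !mxE => Hj.
  have ej : e <= p ord0 j by exact: bigmin_le.
  have := ler_norm (- (z ord0 j - p ord0 j)); rewrite normrN => Hn.
  apply: ltW; lra.
rewrite Ez (eq_bigr (fun j => \sum_i l i * y i ord0 j)); last first.
  by move=> j _; rewrite summxE; apply: eq_bigr => i _; rewrite mxE.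
rewrite exchange_big /= -Hl; apply: eq_bigr => i _.
by rewrite -mulr_sumr (proj2 (Hy i)) mulr1.
Qed.

Section Legendre.
Variable h : V -> \bar R.
Hypothesis hL : legendre h.
Local Notation f := (fine \o h).

Lemma h_fin x : edom h x -> h x = (f x)%:E.
Proof.
case: hL => [[Hp _] _ _ _ _]; rewrite /edom /= => Hx; have := Hp x.
by case: (h x) Hx.
Qed.

Lemma conv_edom x y t : edom h x -> edom h y -> 0 <= t <= 1 ->
  edom h (t *: x + (1 - t) *: y) /\
  f (t *: x + (1 - t) *: y) <= t * f x + (1 - t) * f y.
Proof.
move=> Ex Ey /andP[t0 t1].
have [->|tn0] := eqVneq t 0.
  by rewrite scale0r add0r subr0 scale1r mul0r add0r mul1r.
have [->|tn1] := eqVneq t 1.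
  by rewrite scale1r subrr scale0r addr0 mul1r mul0r addr0.
have tt : 0 < t < 1 by rewrite !lt_neqAle eq_sym tn0 tn1 t0 t1.
case: hL => [_ _ Hc _ _]; have := Hc x y t tt.
rewrite (h_fin Ex) (h_fin Ey) -!EFinM -EFinD => Hle.
have Ez : edom h (t *: x + (1 - t) *: y).
  by rewrite /edom /=; apply: (le_lt_trans Hle); exact: ltry.
split => //; move: Hle; rewrite (h_fin Ez) lee_fin; exact.
Qed.

Lemma int_diff x : interior (edom h) x -> differentiable f x.
Proof. by case: hL => [_ _ _ [_ [Hd _]] _]; apply: Hd. Qed.

Lemma subgrad x z : interior (edom h) x -> edom h z ->
  f x + dotv (grad h x) (z - x) <= f z.
Proof.
move=> Ix Ez.
have Ex : edom h x by move: Ix => /interiorP [e e0 He]; apply: He; rewrite subrr normr0.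
have Hc := @dir_deriv (fine \o h) x (z - x) (int_diff Ix).
suff : dotv (grad h x) (z - x) <= f z - f x by rewrite lerBrDl.
apply: (cvgr_to_le Hc).
near=> s.
have s0 : 0 < s by near: s; exact: nbhs_right_gt.
have s1 : s < 1 by near: s; exact: nbhs_right_lt.
have -> : x + s *: (z - x) = s *: z + (1 - s) *: x.
  by rewrite scalerBr scalerBl scale1r addrC -addrA [- _ + _]addrC.
have [_ Hle] := conv_edom Ez Ex (t:=s) (ltac:(by rewrite !ltW)).
rewrite ler_pdivrMl // mulrC.
move: Hle; set a := f (_ + _); nra.
Unshelve. all: by end_near. Qed.


Lemma breg_ge0 p x : interior (edom h) x -> edom h p -> 0 <= bregman h p x.
Proof. by move=> Ix Ep; rewrite /bregman; move: (subgrad Ix Ep) => /=; lra. Qed.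

Lemma breg_xx x : bregman h x x = 0.
Proof. by rewrite /bregman [x - x]subrr dotv0r subr0 subrr. Qed.

Lemma aff_all z : aff_hull (edom h) z.
Proof.
case: hL => [_ _ _ [[x0 Ix0] _] _]; move/interiorP: Ix0 => [r r0 Hr].
set N := `|z - x0|.
have N0 : 0 <= N by exact: normr_ge0.
set la := r / (2 * (N + 1)).
have la0 : 0 < la by rewrite divr_gt0 // mulr_gt0 // ltr_pwDr.
set w := x0 + la *: (z - x0).
have Ew : edom h w.
  apply: Hr; rewrite /w opprD addrA subrr add0r normrN normrZ gtr0_norm //.
  rewrite /la mulrAC ltr_pdivrMr ?mulr_gt0 ?ltr_pwDr // -/N; nra.
exists 2%N, (fun i : 'I_2 => if i == ord0 then w else x0),
  (fun i : 'I_2 => if i == ord0 then la^-1 else 1 - la^-1).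
have Ex0 : edom h x0 by apply: Hr; rewrite subrr normr0.
split; first by move=> i; case: (i == ord0).
split; first by rewrite !big_ord_recl big_ord0 /= addr0 addrC subrK.
rewrite !big_ord_recl big_ord0 /= addr0.
apply/rowP => j; rewrite !mxE /w /la.
field; apply/andP; split; rewrite ?gt_eqF // ?mulr_gt0 ?ltr_pwDr //.
Qed.

Lemma rint_int y : rint (edom h) y -> interior (edom h) y.
Proof.
move=> [Ey [e e0 He]]; apply/interiorP; exists e => // z Hz; apply: He.
  exact: aff_all.
by rewrite distrC.
Qed.

Hypothesis Hsimp : Simp `<=` edom h.

Lemma min_interior (q g0 : V) (eta : R) (x yy : V) :
  interior (edom h) yy -> Simp yy -> Simp x ->
  (forall p, Simp p -> eta * dotv q x + (f x - dotv g0 x) <=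
                       eta * dotv q p + (f p - dotv g0 p)) ->
  interior (edom h) x.
Proof.
move=> Iyy Syy Sx Hmin; apply: contrapT => nIx.
have Ex := Hsimp Sx; have Eyy := Hsimp Syy.
have [r r0 Hr] := (iffLR (interiorP _ _)) Iyy.
set d := yy - x.
pose u t := x + t *: d.
have u_conv t : u t = t *: yy + (1 - t) *: x.
  by apply/rowP => j; rewrite !mxE; ring.
have Su t : 0 <= t <= 1 -> Simp (u t) by move=> Ht; rewrite u_conv; exact: simplex_conv.
have Iu t : 0 < t <= 1 -> interior (edom h) (u t).
  move=> /andP[t0 t1]; apply/interiorP; exists (t * r); first exact: mulr_gt0.
  move=> w Hw; set w' := yy + t^-1 *: (w - u t).
  have Ew' : edom h w'.
    apply: Hr; rewrite /w' opprD addrA subrr add0r normrN normrZ gtr0_norm ?invr_gt0 //.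
    by rewrite distrC ltr_pdivrMl.
  have -> : w = t *: w' + (1 - t) *: x.
    apply/rowP => j; rewrite /w' /u /d !mxE; field; by rewrite gt_eqF.
  by apply: (proj1 (conv_edom Ew' Ex _)); rewrite (ltW t0) t1.
set C := eta * dotv q d - dotv g0 d.
have Hgd t : 0 < t <= 1 -> - C <= dotv (grad h (u t)) d.
  move=> /andP[t0 t1]; have Hm := Hmin _ (Su t (ltac:(by rewrite (ltW t0) t1))).
  rewrite /u /= !dotvDr !dotvZr in Hm.
  have Hs := subgrad (Iu t (ltac:(by rewrite t0 t1))) Ex.
  have E1 : x - u t = - (t *: d) by apply/rowP => j; rewrite !mxE; ring.
  rewrite E1 dotvNr dotvZr in Hs.
  move: Hm Hs; rewrite /C /u /=; nra.
set G := dotv (grad h yy) d.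
set L0 := f yy - `|G|.
have HL t : 0 < t <= 1 -> L0 <= f (u t).
  move=> /andP[t0 t1]; have := subgrad Iyy (Hsimp (Su t (ltac:(by rewrite (ltW t0) t1)))).
  have -> : u t - yy = - ((1 - t) *: d) by apply/rowP => j; rewrite !mxE; ring.
  rewrite dotvNr dotvZr -/G /L0 => Hs.
  have := ler_norm G; have := ler_norm (- G); rewrite normrN; nra.
pose z (sg : R) (j : 'I_n) := yy + (sg * (r / 2)) *: delta_mx ord0 j.
have Ez sg j : `|sg| = 1 -> edom h (z sg j).
  move=> Hsg; apply: Hr; rewrite /z opprD addrA subrr add0r normrN normrZ normrM Hsg mul1r.
  rewrite gtr0_norm ?divr_gt0 //.
  apply: (le_lt_trans (ler_wpM2l _ (norm_delta j))); first by rewrite divr_ge0 // ltW.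
  by rewrite mulr1; lra.
have Hgj t j sg : 0 < t <= 1 -> `|sg| = 1 ->
    sg * (r / 2) * grad h (u t) ord0 j <= `|f (z sg j)| + `|L0| + `|C|.
  move=> /andP[t0 t1] Hsg.
  have Hs := subgrad (Iu t (ltac:(by rewrite t0 t1))) (Ez sg j Hsg).
  have E2 : z sg j - u t = (1 - t) *: d + (sg * (r / 2)) *: delta_mx ord0 j.
    by apply/rowP => k; rewrite /z /u /d !mxE; ring.
  rewrite E2 dotvDr !dotvZr dotv_delta in Hs.
  have H1 := Hgd t (ltac:(by rewrite t0 t1)).
  have H2 := HL t (ltac:(by rewrite t0 t1)).
  have := ler_norm (f (z sg j)); have := ler_norm (- L0); have := ler_norm C.
  have := normr_ge0 C; rewrite normrN; move: Hs H1 H2.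
  set g := grad h (u t); set Fz := f (z sg j); set Fu := f (u t). nra.
pose K j := `|f (z 1 j)| + `|f (z (-1) j)| + `|L0| + `|C|.
have K0 j : 0 <= K j by rewrite /K !addr_ge0.
have Kt j : 0 <= (2 * K j) / r.
  by apply: divr_ge0; [apply: mulr_ge0 => //; exact: K0 | exact: ltW].
set B := \sum_j (2 * K j) / r.
have B0 : 0 <= B by apply: sumr_ge0 => j _; exact: Kt.
have Hb t : 0 < t <= 1 -> `|grad h (u t)| <= B.
  move=> Ht; apply: norm_le => // j.
  apply: (@le_trans _ _ ((2 * K j) / r)); last first.
    by rewrite /B (bigD1 j) //= lerDl; apply: sumr_ge0 => i _; exact: Kt.
  rewrite ler_pdivlMr //.
  have G1 := Hgj t j 1 Ht (normr1 _).
  have G2 := Hgj t j (-1) Ht (ltac:(by rewrite normrN normr1)).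
  have := normr_ge0 (f (z (-1) j)); have := normr_ge0 (f (z 1 j)).
  move: G1 G2; rewrite /K; set g := grad h (u t) ord0 j.
  have := normr_ge0 L0; have := normr_ge0 C.
  have [gp|gp] := leP 0 g; [rewrite (ger0_norm gp) | rewrite (ltr0_norm gp)]; nra.
case: hL => [_ _ _ [_ [_ Hes]] _].
have Hcv : (fun k => u (harmonic k)) @ \oo --> x.
  have := cvgD (cvg_cst x) (cvgZr_tmp (a:=d) (@cvg_harmonic R)).
  move=> /(_ eventually_filter eventually_filter eventually_filter).
  by rewrite scale0r addr0.
have Hin k : interior (edom h) (u (harmonic k)).
  by apply: Iu; rewrite harmonic_gt0 /harmonic /= invf_le1 // ler1n.
have := Hes _ _ Hin Hcv nIx.
move/cvgryPge => /(_ (B + 1)) Hev.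
have [k /= Hk] := filter_ex Hev.
have := Hb (harmonic k) (ltac:(by rewrite harmonic_gt0 /harmonic /= invf_le1 // ler1n)).
lra.
Qed.

Lemma first_order (q g0 : V) (eta : R) (x : V) :
  interior (edom h) x -> Simp x ->
  (forall p, Simp p -> eta * dotv q x + (f x - dotv g0 x) <=
                       eta * dotv q p + (f p - dotv g0 p)) ->
  forall p, Simp p ->
  - (eta * (dotv q p - dotv q x) - (dotv g0 p - dotv g0 x)) <= dotv (grad h x) (p - x).
Proof.
move=> Ix Sx Hmin p Sp.
have Hc := @dir_deriv (fine \o h) x (p - x) (int_diff Ix).
apply: (cvgr_to_ge Hc).
near=> s.
have s0 : 0 < s by near: s; exact: nbhs_right_gt.
have s1 : s < 1 by near: s; exact: nbhs_right_lt.
have E : s *: p + (1 - s) *: x = x + s *: (p - x) by apply/rowP => j; rewrite !mxE; ring.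
have Hm := Hmin _ (simplex_conv Sp Sx (t:=s) (ltac:(by rewrite !ltW))).
rewrite E !dotvDr !dotvZr !dotvBr in Hm.
rewrite ler_pdivlMl //; move: Hm => /=; nra.
Unshelve. all: by end_near. Qed.

Lemma breg_min (q : V) (eta : R) (x y0 : V) :
  (forall p, Simp p -> eta * dotv q x + bregman h x y0 <= eta * dotv q p + bregman h p y0) ->
  (forall p, Simp p -> eta * dotv q x + (f x - dotv (grad h y0) x) <=
                       eta * dotv q p + (f p - dotv (grad h y0) p)).
Proof. by move=> H p Sp; move: (H p Sp); rewrite /bregman !dotvBr /=; lra. Qed.

Lemma three_point (q : V) (eta : R) (x y0 : V) :
  interior (edom h) x -> Simp x ->
  (forall p, Simp p -> eta * dotv q x + bregman h x y0 <= eta * dotv q p + bregman h p y0) ->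
  forall p, Simp p ->
  eta * dotv q x + bregman h x y0 + bregman h p x <= eta * dotv q p + bregman h p y0.
Proof.
move=> Ix Sx H p Sp.
have := first_order Ix Sx (breg_min H) Sp.
by rewrite /bregman !dotvBr /=; lra.
Qed.
End Legendre.
End Conv.

Lemma cvg_sumR (R : realType) (I : finType) (F : I -> nat -> R) (l : I -> R) :
  (forall i, F i N @[N --> \oo] --> l i) ->
  (\sum_i F i N) @[N --> \oo] --> \sum_i l i.
Proof.
move=> H; apply: (cvg_big (op := +%R) (x0 := 0) (P := xpredT)) => //.
exact: add_continuous.
Qed.

Section MDPf.
Variables (R : realType) (S : finType) (n : nat).
Variables (P : S -> 'I_n -> S -> R) (c : S -> 'I_n -> R) (gamma : R).
Hypothesis HP : forall s a, is_distr (P s a).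
Hypothesis Hc : forall s a, 0 <= c s a <= 1.
Hypothesis Hg : 0 < gamma < 1.

Lemma g0 : 0 <= gamma. Proof. by case/andP: Hg => /ltW. Qed.
Lemma g1 : gamma < 1. Proof. by case/andP: Hg. Qed.

Lemma Ppi_ge0 pi s s' : is_policy pi -> 0 <= Ppi P pi s s'.
Proof.
move=> Hpi; rewrite /Ppi; apply: sumr_ge0 => a _; apply: mulr_ge0.
  exact: (proj1 (Hpi s)).
exact: (proj1 (HP s a)).
Qed.

Lemma Ppi_sum1 pi s : is_policy pi -> \sum_s' Ppi P pi s s' = 1.
Proof.
move=> Hpi; rewrite /Ppi exchange_big /= -(proj2 (Hpi s)); apply: eq_bigr => a _.
by rewrite -mulr_sumr (proj2 (HP s a)) mulr1.
Qed.

Lemma cpi_bd pi s : is_policy pi -> 0 <= cpi c pi s <= 1.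
Proof.
move=> Hpi; rewrite /cpi; apply/andP; split.
  apply: sumr_ge0 => a _; apply: mulr_ge0; first exact: (proj1 (Hpi s)).
  by case/andP: (Hc s a).
rewrite -(proj2 (Hpi s)); apply: ler_sum => a _.
by rewrite ler_piMr //; [exact: (proj1 (Hpi s)) | case/andP: (Hc s a)].
Qed.

Lemma prob_ge0 pi t s s' : is_policy pi -> 0 <= prob P pi t s s'.
Proof.
move=> Hpi; elim: t s s' => [|t IH] s s' /=; first exact: ler0n.
by apply: sumr_ge0 => m _; apply: mulr_ge0 => //; exact: Ppi_ge0.
Qed.

Lemma sum_ind (F : S -> R) s : \sum_s' (s == s')%:R * F s' = F s.
Proof.
rewrite (bigD1 s) //= eqxx mul1r big1 ?addr0 // => s' ne.
by rewrite eq_sym (negbTE ne) mul0r.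
Qed.

Lemma sum_ind' (F : S -> R) s : \sum_s' F s' * (s' == s)%:R = F s.
Proof.
rewrite (bigD1 s) //= eqxx mulr1 big1 ?addr0 // => s' ne.
by rewrite (negbTE ne) mulr0.
Qed.

Lemma prob_sum1 pi t s : is_policy pi -> \sum_s' prob P pi t s s' = 1.
Proof.
move=> Hpi; elim: t s => [|t IH] s /=.
  rewrite (bigD1 s) //= eqxx big1 ?addr0 // => s' ne.
  by rewrite eq_sym (negbTE ne).
rewrite exchange_big /= -(IH s); apply: eq_bigr => m _.
by rewrite -mulr_sumr Ppi_sum1 // mulr1.
Qed.

Lemma probS pi t s s' : prob P pi t.+1 s s' = \sum_m Ppi P pi s m * prob P pi t m s'.
Proof.
elim: t s s' => [|t IH] s s'.
  by rewrite /= sum_ind sum_ind'.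
transitivity (\sum_s'' (\sum_m Ppi P pi s m * prob P pi t m s'') * Ppi P pi s'' s').
  by apply: eq_bigr => s'' _; rewrite -IH.
under eq_bigr do rewrite mulr_suml.
rewrite exchange_big; apply: eq_bigr => m _ /=; rewrite mulr_sumr.
by apply: eq_bigr => s'' _; rewrite mulrA.
Qed.

Definition W pi (x : S -> R) N s :=
  \sum_(t < N) gamma ^+ t * \sum_s' prob P pi t s s' * x s'.

Lemma WS pi x N s :
  W pi x N.+1 s = x s + gamma * \sum_m Ppi P pi s m * W pi x N m.
Proof.
rewrite /W big_ord_recl; congr (_ + _); first by rewrite expr0 mul1r /= sum_ind.
under eq_bigr do rewrite lift0.
transitivity (\sum_(i < N) \sum_m \sum_s' gamma ^+ i.+1 * (Ppi P pi s m * (prob P pi i m s' * x s'))).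
  apply: eq_bigr => i _; rewrite mulr_sumr.
  under eq_bigr do rewrite probS mulr_suml mulr_sumr.
  rewrite exchange_big; apply: eq_bigr => m _; apply: eq_bigr => s' _.
  by rewrite !mulrA.
rewrite exchange_big mulr_sumr; apply: eq_bigr => m _.
rewrite mulrA mulr_sumr; apply: eq_bigr => i _.
rewrite mulr_sumr mulr_sumr; apply: eq_bigr => s' _.
by rewrite exprS; ring.
Qed.

Lemma W_fix pi x w :
  (forall s, W pi x N s @[N --> \oo] --> w s) ->
  forall s, w s = x s + gamma * \sum_m Ppi P pi s m * w m.
Proof.
move=> Hcv s.
have H1 : W pi x N.+1 s @[N --> \oo] --> w s by move: (Hcv s); rewrite -cvg_shiftS.
have E : (fun N => W pi x N.+1 s) =
         (fun N => x s + gamma * \sum_m Ppi P pi s m * W pi x N m).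
  by apply: funext => N; exact: WS.
rewrite E in H1.
have H2 : (x s + gamma * \sum_m Ppi P pi s m * W pi x N m) @[N --> \oo] -->
          x s + gamma * \sum_m Ppi P pi s m * w m.
  apply: cvgD; first exact: cvg_cst.
  apply: cvgMl_tmp; apply: cvg_sumR => m; apply: cvgMl_tmp; exact: Hcv.
have L1 := cvg_lim (@Rhausdorff R) H1; have L2 := cvg_lim (@Rhausdorff R) H2.
by rewrite -L1 -L2.
Qed.

Lemma fix_unique pi x w1 w2 : is_policy pi ->
  (forall s, w1 s = x s + gamma * \sum_m Ppi P pi s m * w1 m) ->
  (forall s, w2 s = x s + gamma * \sum_m Ppi P pi s m * w2 m) ->
  forall s, w1 s = w2 s.
Proof.
move=> Hpi H1 H2.
have E s : w1 s - w2 s = gamma * \sum_m Ppi P pi s m * (w1 m - w2 m).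
  rewrite {1}(H1 s) {1}(H2 s).
  rewrite [in RHS](eq_bigr (fun m => Ppi P pi s m * w1 m - Ppi P pi s m * w2 m)); last first.
    by move=> m _; rewrite mulrBr.
  by rewrite sumrB; ring.
set M := \big[Num.max/0]_m `|w1 m - w2 m|.
have M0 : 0 <= M by exact: bigmax_ge_id.
have Hs s : `|w1 s - w2 s| <= gamma * M.
  rewrite E normrM (ger0_norm g0); apply: ler_wpM2l; first exact: g0.
  apply: (le_trans (ler_norm_sum _ _ _)).
  rewrite -[M]mul1r -(Ppi_sum1 s Hpi) mulr_suml; apply: ler_sum => m _.
  rewrite normrM (ger0_norm (Ppi_ge0 _ _ Hpi)); apply: ler_wpM2l.
    exact: Ppi_ge0.
  exact: (le_bigmax 0 (fun m => `|w1 m - w2 m|) m).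
have HM : M <= gamma * M.
  apply/bigmax_leP; split; first by apply: mulr_ge0 => //; exact: g0.
  by move=> m _; exact: Hs.
have M00 : M <= 0 by have := g1; nra.
move=> s; apply/eqP; rewrite -subr_eq0 -normr_le0.
apply: le_trans M00; exact: (le_bigmax 0 (fun m => `|w1 m - w2 m|) s).
Qed.

Lemma geo_bd N : \sum_(t < N) gamma ^+ t <= (1 - gamma)^-1.
Proof.
have g1' : 0 < 1 - gamma by rewrite subr_gt0 g1.
rewrite -[X in _ <= X]mulr1 ler_pdivlMl //.
have E : (1 - gamma) * \sum_(t < N) gamma ^+ t = 1 - gamma ^+ N.
  by rewrite -opprB mulNr -subrX1 opprB.
by rewrite E lerBlDr lerDl exprn_ge0 // g0.
Qed.

Lemma W_cvg pi x B s : is_policy pi -> (forall s, 0 <= x s <= B) ->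
  [/\ cvgn (fun N => W pi x N s),
      (forall N, W pi x N s <= limn (fun N => W pi x N s)) &
      limn (fun N => W pi x N s) <= B / (1 - gamma)].
Proof.
move=> Hpi Hx.
have B0 : 0 <= B by case/andP: (Hx s) => ? ?; apply: le_trans; eassumption.
have nd : nondecreasing_seq (fun N => W pi x N s).
  apply/nondecreasing_seqP => N; rewrite /W big_ord_recr /= lerDl.
  apply: mulr_ge0; first by apply: exprn_ge0; exact: g0.
  apply: sumr_ge0 => s' _; apply: mulr_ge0; first exact: prob_ge0.
  by case/andP: (Hx s').
have ub N : W pi x N s <= B / (1 - gamma).
  apply: (@le_trans _ _ (B * \sum_(t < N) gamma ^+ t)); last first.
    by apply: ler_wpM2l => //; exact: geo_bd.
  rewrite /W mulr_sumr; apply: ler_sum => t _.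
  rewrite mulrC; apply: ler_wpM2r; first by apply: exprn_ge0; exact: g0.
  rewrite -[B]mul1r -(prob_sum1 t s Hpi) mulr_suml; apply: ler_sum => s' _.
  apply: ler_wpM2l; first exact: prob_ge0.
  by case/andP: (Hx s').
have cv : cvgn (fun N => W pi x N s).
  apply: nondecreasing_is_cvgn => //; exists (B / (1 - gamma)) => _ [N _ <-].
  exact: ub.
split => //; first exact: nondecreasing_cvgn_le.
by apply: limr_le => //; apply: nearW => N; exact: ub.
Qed.

Lemma Vf_W pi s : Vf P c gamma pi s = limn (fun N => W pi (cpi c pi) N s).
Proof. by []. Qed.

Lemma Vf_fix pi : is_policy pi -> forall s,
  Vf P c gamma pi s = cpi c pi s + gamma * \sum_m Ppi P pi s m * Vf P c gamma pi m.
Proof.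
move=> Hpi; apply: (W_fix (pi := pi) (x := cpi c pi)) => s.
have [cv _ _] := W_cvg (B := 1) s Hpi (fun s => cpi_bd s Hpi).
exact: cv.
Qed.

Lemma Vf_bd pi s : is_policy pi -> 0 <= Vf P c gamma pi s <= (1 - gamma)^-1.
Proof.
move=> Hpi; have [cv le lim] := W_cvg (B := 1) s Hpi (fun s => cpi_bd s Hpi).
rewrite Vf_W; apply/andP; split; last by rewrite -[_^-1]mul1r.
by apply: le_trans (le 0%N); rewrite /W big_ord0.
Qed.

Definition Lv pi s s' := limn (fun N => \sum_(t < N) gamma ^+ t * prob P pi t s s').

Lemma dvisE pi s s' : dvis P gamma pi s s' = (1 - gamma) * Lv pi s s'.
Proof. by []. Qed.

Lemma Lv_W pi s s' N : \sum_(t < N) gamma ^+ t * prob P pi t s s' =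
   W pi (fun m => (m == s')%:R) N s.
Proof. by apply: eq_bigr => t _; rewrite sum_ind'. Qed.

Lemma Lv_cvg pi s s' : is_policy pi ->
  (\sum_(t < N) gamma ^+ t * prob P pi t s s') @[N --> \oo] --> Lv pi s s'.
Proof.
move=> Hpi; rewrite /Lv.
have E : (fun N => \sum_(t < N) gamma ^+ t * prob P pi t s s') =
         (fun N => W pi (fun m => (m == s')%:R) N s).
  by apply: funext => k; exact: Lv_W.
have Hx : forall m, 0 <= ((m == s')%:R : R) <= 1.
  by move=> m; case: (m == s'); rewrite ?ler01 ?lexx ?ler0n.
rewrite E; have [cv _ _] := W_cvg s Hpi Hx; exact: cv.
Qed.

Lemma Lv_ge pi s s' N : is_policy pi ->
  \sum_(t < N) gamma ^+ t * prob P pi t s s' <= Lv pi s s'.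
Proof.
move=> Hpi; rewrite /Lv.
have E : (fun N => \sum_(t < N) gamma ^+ t * prob P pi t s s') =
         (fun N => W pi (fun m => (m == s')%:R) N s).
  by apply: funext => k; exact: Lv_W.
have Hx : forall m, 0 <= ((m == s')%:R : R) <= 1.
  by move=> m; case: (m == s'); rewrite ?ler01 ?lexx ?ler0n.
rewrite E Lv_W; have [_ le _] := W_cvg s Hpi Hx; exact: le.
Qed.

Lemma Lv_ge0 pi s s' : is_policy pi -> 0 <= Lv pi s s'.
Proof. by move=> Hpi; apply: le_trans (Lv_ge s s' 0 Hpi); rewrite big_ord0. Qed.

Lemma Lv_diag pi s : is_policy pi -> 1 <= Lv pi s s.
Proof.
move=> Hpi; apply: le_trans (Lv_ge s s 1 Hpi).
by rewrite big_ord1 /= expr0 mul1r eqxx.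
Qed.

Lemma LA_fix pi (A : S -> R) : is_policy pi -> forall s,
  \sum_s' Lv pi s s' * A s' =
  A s + gamma * \sum_m Ppi P pi s m * (\sum_s' Lv pi m s' * A s').
Proof.
move=> Hpi; apply: (W_fix (pi := pi) (x := A) (w := fun s => \sum_s' Lv pi s s' * A s')).
move=> s.
have E : (fun N => W pi A N s) =
   (fun N => \sum_s' (\sum_(t < N) gamma ^+ t * prob P pi t s s') * A s').
  apply: funext => N; rewrite /W.
  under eq_bigr do rewrite mulr_sumr.
  rewrite exchange_big; apply: eq_bigr => s' _ /=; rewrite mulr_suml.
  by apply: eq_bigr => t _; rewrite mulrA.
rewrite E; apply: cvg_sumR => s'; apply: cvgMr_tmp; exact: Lv_cvg.
Qed.

Lemma Lv_sum pi s : is_policy pi -> \sum_s' Lv pi s s' = (1 - gamma)^-1.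
Proof.
move=> Hpi.
have H1 := LA_fix (fun=> 1) Hpi.
have g1' : 1 - gamma != 0 by rewrite subr_eq0 eq_sym lt_eqF // g1.
have := @fix_unique pi (fun=> 1) (fun s => \sum_s' Lv pi s s' * 1)
   (fun=> (1 - gamma)^-1) Hpi H1.
have H2 : forall s, (1 - gamma)^-1 = 1 + gamma * \sum_m Ppi P pi s m * (1 - gamma)^-1.
  move=> s0; rewrite -mulr_suml Ppi_sum1 // mul1r; field; exact: g1'.
move=> /(_ H2 s) <-; apply: eq_bigr => s' _; by rewrite mulr1.
Qed.

Lemma QE pi (pi2 : policy R S n) s : is_policy pi ->
  \sum_a pi2 s ord0 a * Qf P c gamma pi s a =
  cpi c pi2 s + gamma * \sum_m Ppi P pi2 s m * Vf P c gamma pi m.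
Proof.
move=> Hpi; rewrite /Qf /cpi /Ppi.
under eq_bigr do rewrite mulrDr.
rewrite big_split /=; congr (_ + _).
rewrite mulr_sumr.
under [RHS]eq_bigr do rewrite mulr_suml mulr_sumr.
rewrite [RHS]exchange_big /=; apply: eq_bigr => a _.
rewrite mulr_sumr mulr_sumr; apply: eq_bigr => m _; ring.
Qed.

Lemma pdl pi pi' : is_policy pi -> is_policy pi' -> forall s,
  Vf P c gamma pi' s - Vf P c gamma pi s =
  \sum_s' Lv pi' s s' *
     (\sum_a (pi' s' ord0 a - pi s' ord0 a) * Qf P c gamma pi s' a).
Proof.
move=> Hpi Hpi'.
pose A s := \sum_a (pi' s ord0 a - pi s ord0 a) * Qf P c gamma pi s a.
have EA s : A s = (cpi c pi' s + gamma * \sum_m Ppi P pi' s m * Vf P c gamma pi m)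
              - Vf P c gamma pi s.
  rewrite /A (eq_bigr (fun a => pi' s ord0 a * Qf P c gamma pi s a -
                               pi s ord0 a * Qf P c gamma pi s a)); last first.
    by move=> a _; rewrite mulrBl.
  by rewrite sumrB !QE // -Vf_fix.
apply: (@fix_unique pi' A); first exact: Hpi'.
  move=> s.
  have E2 : \sum_m Ppi P pi' s m * (Vf P c gamma pi' m - Vf P c gamma pi m) =
     \sum_m Ppi P pi' s m * Vf P c gamma pi' m - \sum_m Ppi P pi' s m * Vf P c gamma pi m.
    by rewrite -sumrB; apply: eq_bigr => m _; rewrite mulrBr.
  rewrite EA E2 {1}(Vf_fix Hpi' s); ring.
exact: LA_fix.
Qed.

End MDPf.

Lemma recur (R : realFieldType) (gamma th tau : R) (Dl D eta S : nat -> R) :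
  0 < gamma < 1 -> (1 - gamma)^-1 <= th -> 0 <= tau ->
  (forall k, 0 < eta k) -> (forall k, 0 <= D k) ->
  (forall k, eta k / gamma <= eta k.+1) ->
  (1 - gamma) / gamma * D 0%N <= eta 0%N ->
  Dl 0%N <= (1 - gamma)^-1 ->
  (forall k, eta k * S k <= D k - D k.+1) ->
  (forall k, (1 - gamma) * th * (Dl k.+1 - Dl k) - 2 * th * tau
             + (1 - gamma) * Dl k - 2 * tau <= S k) ->
  forall k, Dl k <= (1 - th^-1) ^+ k * (2 / (1 - gamma)) + 4 * th / (1 - gamma) * tau.
Proof.
move=> /andP[g0 g1] Hth t0 He HD Hes He0 HDl0 H1 H2.
set a := 1 - gamma.
have a0 : 0 < a by rewrite /a subr_gt0.
have a1 : a < 1 by rewrite /a ltrBlDr ltrDl.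
have ath : 1 <= a * th.
  by have := ler_wpM2l (ltW a0) Hth; rewrite mulfV ?gt_eqF.
have th1 : 1 < th by nra.
have th0 : 0 < th by lra.
have thn0 : th != 0 by rewrite gt_eqF.
have th1n0 : th - 1 != 0 by rewrite subr_eq0 gt_eqF.
have an0 : a != 0 by rewrite gt_eqF.
set rho := 1 - th^-1.
have rho0 : 0 <= rho.
  by rewrite /rho subr_ge0 invf_le1 // ltW.
pose w k := (a * eta k * (th - 1))^-1.
pose v k := (a * th * eta k)^-1.
set e := 2 * tau * (th + 1) / (a * th).
have e0 : 0 <= e.
  apply: divr_ge0; last by apply: mulr_ge0; exact: ltW.
  by apply: mulr_ge0; [apply: mulr_ge0 | apply: addr_ge0]; rewrite // ltW.
have w0 k : 0 <= w k.
  rewrite /w invr_ge0; apply: mulr_ge0; last by rewrite subr_ge0 ltW.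
  by apply: mulr_ge0; [exact: ltW | exact: ltW (He k)].
have F1 k : rho * w k = v k.
  rewrite /rho /w /v; field.
  by rewrite th1n0 thn0 an0 (gt_eqF (He k)).
have F2 k : w k.+1 <= v k.
  rewrite /w /v lef_pV2 ?posrE ?mulr_gt0 ?subr_gt0 //.
  have Hq : eta k / gamma * gamma = eta k by rewrite divfK // gt_eqF.
  have X1 : gamma * th <= th - 1 by move: ath; rewrite /a; nra.
  have := Hes k; move: Hq; set q := eta k / gamma => Hq Hqe.
  have q0 : 0 <= q by rewrite /q divr_ge0 // ltW // He.
  rewrite -Hq; apply: (@le_trans _ _ (a * q * (th - 1))).
    have aq : 0 <= a * q by rewrite mulr_ge0 // ltW.
    nra.
  have : 0 <= a * (th - 1) by rewrite mulr_ge0 // subr_ge0 ltW.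
  nra.
have F3 k : Dl k.+1 <= rho * Dl k + v k * (D k - D k.+1) + e.
  have Hs : S k <= (D k - D k.+1) / eta k.
    by rewrite ler_pdivlMr // mulrC.
  have Hath : 0 < a * th by rewrite mulr_gt0.
  rewrite -(ler_pM2l Hath).
  have -> : a * th * (rho * Dl k + v k * (D k - D k.+1) + e) =
            (a * th - a) * Dl k + (D k - D k.+1) / eta k + 2 * tau * (th + 1).
    rewrite /rho /v /e; field.
    by rewrite thn0 an0 (gt_eqF (He k)).
  have := H2 k; rewrite -/a; lra.
pose Psi k := Dl k + D k * w k.
have HPsi k : Psi k.+1 <= rho * Psi k + e.
  rewrite /Psi; have := F3 k; have := F1 k.
  have := ler_wpM2l (HD k.+1) (F2 k).
  move=> Ha Hb Hc; rewrite -Hb in Ha Hc; rewrite mulrDr; nra.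
have Hind k : Psi k <= rho ^+ k * Psi 0%N + th * e.
  elim: k => [|k IH]; first by rewrite expr0 mul1r lerDl mulr_ge0 // ltW.
  apply: (le_trans (HPsi k)).
  have Hr : rho * th = th - 1 by rewrite /rho mulrBl mul1r mulVf.
  rewrite exprS -mulrA.
  have := ler_wpM2l rho0 IH; nra.
have HPsi0 : Psi 0%N <= 2 / a.
  rewrite /Psi /w.
  have HD0 : D 0%N <= gamma * eta 0%N / a.
    have : gamma * (a / gamma * D 0%N) <= gamma * eta 0%N.
      by apply: ler_wpM2l; [exact: ltW | exact: He0].
    have -> : gamma * (a / gamma * D 0%N) = a * D 0%N.
      by field; rewrite gt_eqF.
    by move=> H; rewrite ler_pdivlMr // mulrC.
  have Ha : a = 1 - gamma by [].
  have Hth' : gamma <= a * (th - 1) by lra.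
  have : D 0%N * (a * eta 0%N * (th - 1))^-1 <= a^-1.
    rewrite ler_pdivrMr; last by rewrite !mulr_gt0 ?subr_gt0 ?He.
    apply: (le_trans HD0).
    have -> : a^-1 * (a * eta 0%N * (th - 1)) = eta 0%N * (th - 1).
      by rewrite !mulrA mulVf // mul1r.
    rewrite ler_pdivrMr //.
    have := He 0%N; nra.
  have : Dl 0%N <= a^-1 by exact: HDl0.
  lra.
move=> k.
have HDk : Dl k <= Psi k by rewrite /Psi lerDl mulr_ge0.
apply: (le_trans HDk); apply: (le_trans (Hind k)).
apply: lerD; first by apply: ler_wpM2l => //; exact: exprn_ge0.
have -> : th * e = 2 * tau * (th + 1) / a.
  by rewrite /e; field; rewrite thn0 an0.
have -> : 4 * th / a * tau = (4 * th * tau) / a by field.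
rewrite ler_pM2r ?invr_gt0 //; nra.
Qed.

Lemma dotv_row (R : realType) (n : nat) (F : 'I_n -> R) (v : 'rV[R]_n) :
  dotv (\row_a F a) v = \sum_a F a * v ord0 a.
Proof. by apply: eq_bigr => a _; rewrite mxE. Qed.

Lemma err_bd (R : realType) (n : nat) (Qh Q : 'I_n -> R) (tau : R) (v w : 'rV[R]_n) :
  simplex v -> simplex w -> (forall a, `|Qh a - Q a| <= tau) ->
  `|(dotv (\row_a Qh a) v - dotv (\row_a Qh a) w) -
      \sum_a (v ord0 a - w ord0 a) * Q a| <= 2 * tau.
Proof.
move=> [v0 v1] [w0 w1] HQ.
rewrite !dotv_row -sumrB -sumrB.
rewrite (eq_bigr (fun a => (v ord0 a - w ord0 a) * (Qh a - Q a))); last first.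
  by move=> a _; ring.
apply: (le_trans (ler_norm_sum _ _ _)).
apply: (@le_trans _ _ (\sum_a (v ord0 a + w ord0 a) * tau)).
  apply: ler_sum => a _; rewrite normrM; apply: ler_pM => //.
  by apply: (le_trans (ler_normB _ _)); rewrite !ger0_norm.
by rewrite -mulr_suml big_split /= v1 w1 mulrC; rewrite -[1 + 1]/2.
Qed.

Unset Implicit Arguments. Set Strict Implicit.

Theorem theorem14 (R : realType) (S : finType) (n : nat)
  (P : S -> 'I_n -> S -> R) (c : S -> 'I_n -> R) (gamma : R)
  (h : 'rV[R]_n -> \bar R)
  (pistar : policy R S n) (rho : S -> R)
  (pi : nat -> policy R S n) (Qhat : nat -> S -> 'I_n -> R)
  (eta : nat -> R) (tau : R) :
  (* MDP *)
  (forall s a, is_distr (P s a)) ->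
  (forall s a, 0 <= c s a <= 1) ->
  0 < gamma < 1 ->
  (* Bregman generator *)
  legendre h ->
  @simplex R n `<=` edom h ->
  rint (@simplex R n) `<=` rint (edom h) ->
  (* optimal policy and initial distribution *)
  is_policy pistar ->
  (forall p, is_policy p -> forall s, Vf P c gamma pistar s <= Vf P c gamma p s) ->
  is_distr rho ->
  (* inexact policy mirror descent *)
  rint_policy (pi 0%N) ->
  (forall k s a, `|Qhat k s a - Qf P c gamma (pi k) s a| <= tau) ->
  (forall k s, @simplex R n (pi k.+1 s) /\
     forall p, @simplex R n p ->
       eta k * dotv (\row_a Qhat k s a) (pi k.+1 s) + bregman h (pi k.+1 s) (pi k s)
       <= eta k * dotv (\row_a Qhat k s a) p + bregman h p (pi k s)) ->
  (forall k, 0 < eta k) ->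
  eta 0%N >= (1 - gamma) / gamma *
     \sum_s drho P gamma pistar rho s * bregman h (pistar s) (pi 0%N s) ->
  (forall k, eta k.+1 >= eta k / gamma) ->
  let vartheta := (((1 - gamma)^-1)%:E * ratio_norm (drho P gamma pistar rho) rho)%E in
  forall k : nat,
    (forall th : R, vartheta = th%:E ->
       Vrho P c gamma (pi k) rho - Vstar P c gamma rho
       <= (1 - th^-1) ^+ k * (2 / (1 - gamma)) + 4 * th / (1 - gamma) * tau)
    /\
    (vartheta = +oo%E -> tau = 0 ->
       Vrho P c gamma (pi k) rho - Vstar P c gamma rho <= 2 / (1 - gamma)).
Proof.
move=> HP Hc Hg hL Hsimp Hrint Hpis Hopt Hrho Hpi0 HQ Hmd Heta Heta0 Hetas vartheta k.
have g0 : 0 <= gamma by case/andP: Hg => /ltW.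
have g1 : gamma < 1 by case/andP: Hg.
have a0 : 0 < 1 - gamma by rewrite subr_gt0.
have Hpol : forall k, is_policy (pi k).
  by case => [|k'] s; [exact: (proj1 Hpi0 s) | exact: (proj1 (Hmd k' s))].
have I0 s : interior (edom h) (pi 0%N s).
  apply: (rint_int hL); apply: Hrint; apply: pos_rint.
    exact: (proj1 Hpi0 s).
  exact: (proj2 Hpi0 s).
have Hint : forall k s, interior (edom h) (pi k s).
  case => [|k'] s; first exact: I0.
  apply: (min_interior hL Hsimp (I0 s) (proj1 Hpi0 s) (proj1 (Hmd k' s))).
  exact: (breg_min (proj2 (Hmd k' s))).
have Vstar_le : forall p, is_policy p -> Vrho P c gamma pistar rho <= Vrho P c gamma p rho.
  move=> p Hp; rewrite /Vrho; apply: ler_sum => s _; apply: ler_wpM2l.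
    exact: (proj1 Hrho s).
  exact: Hopt.
have HVstar : Vstar P c gamma rho = Vrho P c gamma pistar rho.
  rewrite /Vstar; set E := (X in inf X).
  have Hlb : forall y, E y -> Vrho P c gamma pistar rho <= y.
    by move=> _ [p Hp <-]; exact: Vstar_le.
  have HE : E (Vrho P c gamma pistar rho) by exists pistar.
  apply/eqP; rewrite eq_le; apply/andP; split.
    by apply: (ge_inf _ HE); exists (Vrho P c gamma pistar rho).
  by apply: lb_le_inf; [exists (Vrho P c gamma pistar rho) | exact: Hlb].
have Vrho_bd : forall p, is_policy p -> 0 <= Vrho P c gamma p rho <= (1 - gamma)^-1.
  move=> p Hp; rewrite /Vrho; apply/andP; split.
    apply: sumr_ge0 => s _; apply: mulr_ge0; first exact: (proj1 Hrho s).
    by case/andP: (Vf_bd HP Hc Hg s Hp).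
  apply: (@le_trans _ _ (\sum_s rho s * (1 - gamma)^-1)).
    apply: ler_sum => s _; apply: ler_wpM2l; first exact: (proj1 Hrho s).
    by case/andP: (Vf_bd HP Hc Hg s Hp).
  by rewrite -mulr_suml (proj2 Hrho) mul1r.
rewrite HVstar.
have gap_bd : Vrho P c gamma (pi k) rho - Vrho P c gamma pistar rho <= (1 - gamma)^-1.
  case/andP: (Vrho_bd _ (Hpol k)) => _ H1; case/andP: (Vrho_bd _ Hpis) => H2 _; lra.
split; last first.
  move=> _ _; apply: (le_trans gap_bd).
  rewrite ler_pdivlMr // mulVf ?gt_eqF //; lra.
move=> th Hth.
set dstar := drho P gamma pistar rho.
have drho_ge0 : forall p s, is_policy p -> 0 <= drho P gamma p rho s.
  move=> p s Hp; rewrite /drho; apply: sumr_ge0 => s0 _; apply: mulr_ge0.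
    exact: (proj1 Hrho s0).
  by rewrite dvisE; apply: mulr_ge0; [exact: ltW | exact: Lv_ge0].
have drho_ge : forall p s, is_policy p -> (1 - gamma) * rho s <= drho P gamma p rho s.
  move=> p s Hp; rewrite /drho (bigD1 s) //= -[X in X <= _]addr0; apply: lerD.
    rewrite dvisE mulrCA; apply: ler_wpM2l; first exact: ltW.
    by apply: ler_peMr; [exact: (proj1 Hrho s) | exact: Lv_diag].
  apply: sumr_ge0 => s0 _; apply: mulr_ge0; first exact: (proj1 Hrho s0).
  by rewrite dvisE; apply: mulr_ge0; [exact: ltW | exact: Lv_ge0].
have drho_sum : forall p, is_policy p -> \sum_s drho P gamma p rho s = 1.
  move=> p Hp; rewrite /drho exchange_big /=.
  rewrite (eq_bigr (fun s => rho s)); first exact: (proj2 Hrho).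
  move=> s _; rewrite -mulr_sumr.
  under eq_bigr do rewrite dvisE.
  by rewrite -mulr_sumr Lv_sum // mulfV ?gt_eqF // mulr1.
have pdlr : forall p p', is_policy p -> is_policy p' ->
  (1 - gamma) * (Vrho P c gamma p' rho - Vrho P c gamma p rho) =
  \sum_s' drho P gamma p' rho s' *
     (\sum_a (p' s' ord0 a - p s' ord0 a) * Qf P c gamma p s' a).
  move=> p p' Hp Hp'.
  rewrite /Vrho -sumrB.
  under eq_bigr do rewrite -mulrBr (pdl HP Hc Hg Hp Hp').
  rewrite mulr_sumr /drho.
  under [RHS]eq_bigr do rewrite mulr_suml.
  rewrite [RHS]exchange_big /=; apply: eq_bigr => s _.
  rewrite mulrA mulr_sumr; apply: eq_bigr => s' _.
  by rewrite dvisE; ring.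
have [r Hr Hthr] : exists2 r : R, ratio_norm dstar rho = r%:E &
                                   th = (1 - gamma)^-1 * r.
  move: Hth; rewrite /vartheta -/dstar.
  case: (ratio_norm _ _) => [r||].
  - by move=> [<-]; exists r.
  - by rewrite mulry gtr0_sg ?invr_gt0 // mul1e.
  - by rewrite mulrNy gtr0_sg ?invr_gt0 // mul1e.
have dst0 : forall s, 0 <= dstar s by move=> s; exact: drho_ge0.
have Hdr : forall s, dstar s <= r * rho s.
  move=> s.
  have : (ratio_norm dstar rho <= r%:E)%E by rewrite Hr.
  move/bigmax_leP => [_ /(_ s isT)].
  have [r0|rn0] := eqVneq (rho s) 0.
    rewrite r0 mulr0.
    have [->|dn0] := eqVneq (dstar s) 0; first by [].
    by rewrite leye_eq.
  have rp : 0 < rho s by rewrite lt_neqAle eq_sym rn0 (proj1 Hrho s).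
  by rewrite lee_fin ler_pdivrMr.
have r1 : 1 <= r.
  have : \sum_s dstar s <= \sum_s r * rho s by apply: ler_sum => s _; exact: Hdr.
  by rewrite drho_sum // -mulr_sumr (proj2 Hrho) mulr1.
have Hth1 : (1 - gamma)^-1 <= th.
  by rewrite Hthr ler_peMr // invr_ge0 ltW.
have Hr' : r = (1 - gamma) * th by rewrite Hthr mulrA mulfV ?gt_eqF // mul1r.
have [s0 _] : exists s : S, True.
  case: (pickP (fun _ : S => true)) => [s0 _|H0]; first by exists s0.
  by move: (proj2 Hrho); rewrite big_pred0 // => /eqP; rewrite eq_sym oner_eq0.
have [a1 _] : exists a : 'I_n, True.
  case: (pickP (fun _ : 'I_n => true)) => [a1 _|H0]; first by exists a1.
  by move: (proj2 (Hpis s0)); rewrite big_pred0 // => /eqP; rewrite eq_sym oner_eq0.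
have tau0 : 0 <= tau by exact: le_trans (normr_ge0 _) (HQ 0%N s0 a1).
pose Dl j := Vrho P c gamma (pi j) rho - Vrho P c gamma pistar rho.
pose Db j := \sum_s dstar s * bregman h (pistar s) (pi j s).
pose ah j s := dotv (\row_a Qhat j s a) (pi j.+1 s) - dotv (\row_a Qhat j s a) (pi j s).
pose bq j s := dotv (\row_a Qhat j s a) (pi j s) - dotv (\row_a Qhat j s a) (pistar s).
pose Sk j := \sum_s dstar s * (ah j s + bq j s).
pose A j s := \sum_a (pi j.+1 s ord0 a - pi j s ord0 a) * Qf P c gamma (pi j) s a.
pose As j s := \sum_a (pistar s ord0 a - pi j s ord0 a) * Qf P c gamma (pi j) s a.
have Bxy0 j s : 0 <= bregman h (pi j.+1 s) (pi j s).
  apply: (breg_ge0 hL (Hint j s)); exact: Hsimp _ (proj1 (Hmd j s)).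
have ah0 j s : ah j s <= 0.
  have := three_point hL (Hint j.+1 s) (proj1 (Hmd j s)) (proj2 (Hmd j s)) (Hpol j s).
  rewrite breg_xx.
  have := breg_ge0 hL (Hint j.+1 s) (Hsimp _ (Hpol j s)).
  have := Bxy0 j s; have := Heta j; rewrite /ah; nra.
have TPs j s : eta j * (ah j s + bq j s) <=
    bregman h (pistar s) (pi j s) - bregman h (pistar s) (pi j.+1 s).
  have := three_point hL (Hint j.+1 s) (proj1 (Hmd j s)) (proj2 (Hmd j s)) (Hpis s).
  have := Bxy0 j s; rewrite /ah /bq; nra.
have err1 j s : A j s - 2 * tau <= ah j s.
  have := err_bd (proj1 (Hmd j s)) (Hpol j s) (HQ j s).
  rewrite -/(ah j s) -/(A j s) => /ler_normlP [H _]; lra.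
have err2 j s : - As j s - 2 * tau <= bq j s.
  have := err_bd (Hpis s) (Hpol j s) (HQ j s).
  rewrite -/(As j s) /bq => /ler_normlP [_ H]; lra.
have H1 j : eta j * Sk j <= Db j - Db j.+1.
  rewrite /Sk /Db mulr_sumr -sumrB; apply: ler_sum => s _.
  rewrite mulrCA -mulrBr; apply: ler_wpM2l; first exact: dst0.
  exact: TPs.
have H2 j : (1 - gamma) * th * (Dl j.+1 - Dl j) - 2 * th * tau
            + (1 - gamma) * Dl j - 2 * tau <= Sk j.
  set d1 := drho P gamma (pi j.+1) rho.
  have E1 := pdlr _ _ (Hpol j) (Hpol j.+1).
  have E2 := pdlr _ _ (Hpol j) Hpis.
  rewrite -/d1 -/dstar in E1 E2.
  have L1 : r * \sum_s d1 s * (A j s - 2 * tau) <= (1 - gamma) * \sum_s dstar s * ah j s.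
    rewrite !mulr_sumr; apply: ler_sum => s _.
    have e1 := err1 j s; have e0 := ah0 j s; have hd := Hdr s.
    have hd1 : (1 - gamma) * rho s <= d1 s by exact: drho_ge.
    have r0 : 0 <= r by lra.
    have rho0 := proj1 Hrho s.
    have P1 : 0 <= (1 - gamma) * ((r * rho s - dstar s) * (- ah j s)).
      by apply: mulr_ge0; [exact: ltW | apply: mulr_ge0; lra].
    have P2 : 0 <= (1 - gamma) * (r * rho s * (ah j s - (A j s - 2 * tau))).
      by apply: mulr_ge0; [exact: ltW | apply: mulr_ge0; [exact: mulr_ge0 | lra]].
    have P3 : 0 <= r * ((d1 s - (1 - gamma) * rho s) * (- (A j s - 2 * tau))).
      by apply: mulr_ge0 => //; apply: mulr_ge0; lra.
    nra.
  have EL1 : \sum_s d1 s * (A j s - 2 * tau) = \sum_s d1 s * A j s - 2 * tau.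
    rewrite (eq_bigr (fun s => d1 s * A j s - (2 * tau) * d1 s)); last by move=> s _; ring.
    by rewrite sumrB -mulr_sumr drho_sum // mulr1.
  have L2 : \sum_s dstar s * (- As j s - 2 * tau) <= \sum_s dstar s * bq j s.
    by apply: ler_sum => s _; apply: ler_wpM2l; [exact: dst0 | exact: err2].
  have EL2 : \sum_s dstar s * (- As j s - 2 * tau) = - (\sum_s dstar s * As j s) - 2 * tau.
    rewrite (eq_bigr (fun s => - (dstar s * As j s) - (2 * tau) * dstar s)); last first.
      by move=> s _; ring.
    by rewrite sumrB sumrN -mulr_sumr drho_sum // mulr1.
  have ES : Sk j = \sum_s dstar s * ah j s + \sum_s dstar s * bq j s.
    by rewrite /Sk -big_split; apply: eq_bigr => s _; rewrite mulrDr.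
  rewrite EL1 in L1; rewrite EL2 in L2; rewrite ES.
  rewrite -(ler_pM2l a0).
  move: E1 E2 L1 L2; rewrite /Dl Hr' -/(A j) -/(As j).
  set V0 := Vrho P c gamma (pi j) rho.
  set V1 := Vrho P c gamma (pi j.+1) rho.
  set Vs := Vrho P c gamma pistar rho.
  set X1 := \sum_s d1 s * A j s.
  set X2 := \sum_s dstar s * As j s.
  set Y1 := \sum_s dstar s * ah j s.
  set Y2 := \sum_s dstar s * bq j s.
  move=> E1 E2 L1 L2.
  have l2 := ler_wpM2l (ltW a0) L2.
  have e1 : (1 - gamma) * ((1 - gamma) * th * (V1 - V0)) = (1 - gamma) * th * X1.
    by rewrite -E1; ring.
  have e2 : (1 - gamma) * ((1 - gamma) * (V0 - Vs)) = - ((1 - gamma) * X2).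
    by rewrite -E2; ring.
  nra.
have HDb0 j : 0 <= Db j.
  apply: sumr_ge0 => s _; apply: mulr_ge0; first exact: dst0.
  apply: (breg_ge0 hL (Hint j s)); exact: Hsimp _ (Hpis s).
have HDl0 : Dl 0%N <= (1 - gamma)^-1.
  rewrite /Dl; case/andP: (Vrho_bd _ (Hpol 0%N)) => _ X; case/andP: (Vrho_bd _ Hpis) => Y _.
  lra.
exact: (recur Hg Hth1 tau0 Heta HDb0 Hetas Heta0 HDl0 H1 H2 k).
Qed.
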